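(* Let $X$ be a set, let $\mathcal C\subseteq\mathcal P(X)$ be a family of sets, and let $T:\mathcal C\to\mathcal C$ be an order reversing quasi involution on $\mathcal C$ which respects inclusions. Then there exists an order reversing quasi involution $\hat T:\mathcal P(X)\to\mathcal P(X)$ with $\hat T|_{\mathcal C}=T$.
   Context: $\mathcal P(X)$ is the power set of $X$. For $\mathcal C\subseteq\mathcal P(X)$, a map $T:\mathcal C\to\mathcal C$ is an order reversing quasi involution on $\mathcal C$ if for all $K,L\in\mathcal C$: (i) $K\subseteq TTK$, and (ii) $L\subseteq K$ implies $TK\subseteq TL$ (when $\mathcal C=\mathcal P(X)$ this is an order reversing quasi involution on $\mathcal P(X)$). $T:\mathcal C\to\mathcal C$ respects inclusions if for any $K\in\mathcal C$ and any family $(K_i)_{i\in I}\subseteq\mathcal C$ with $K\subseteq\bigcup_{i\in I}K_i$, one has $TK\supseteq\bigcap_{i\in I}TK_i$. *)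

(* Defs.v *)
Set Implicit Arguments.

Definition subset {X : Type} (A B : X -> Prop) : Prop := forall x, A x -> B x.

Definition maps_into {X : Type} (C : (X -> Prop) -> Prop)
  (T : (X -> Prop) -> (X -> Prop)) : Prop := forall K, C K -> C (T K).

Definition orqi_on {X : Type} (C : (X -> Prop) -> Prop)
  (T : (X -> Prop) -> (X -> Prop)) : Prop :=
  maps_into C T /\
  (forall K, C K -> subset K (T (T K))) /\
  (forall K L, C K -> C L -> subset L K -> subset (T K) (T L)).

Definition orqi {X : Type} (T : (X -> Prop) -> (X -> Prop)) : Prop :=
  (forall K, subset K (T (T K))) /\
  (forall K L, subset L K -> subset (T K) (T L)).

Definition respects_inclusions {X : Type} (C : (X -> Prop) -> Prop)
  (T : (X -> Prop) -> (X -> Prop)) : Prop :=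
  forall (I : Type) (K : X -> Prop) (Ks : I -> X -> Prop),
    C K -> (forall i, C (Ks i)) ->
    subset K (fun x => exists i, Ks i x) ->
    subset (fun x => forall i, T (Ks i) x) (T K).

(* Main.v *)
Require Import Defs.

Theorem theorem1p6 (X : Type) (C : (X -> Prop) -> Prop)
  (T : (X -> Prop) -> (X -> Prop)) :
  orqi_on C T -> respects_inclusions C T ->
  exists That : (X -> Prop) -> (X -> Prop),
    orqi That /\ (forall K, C K -> forall x, That K x <-> T K x).
Proof.
  intros [Hmap [Hinv Hanti]] Hresp.
  set (R := fun x y => exists L, C L /\ L y /\ T L x).
  assert (Rsym : forall x y, R x y -> R y x).
  { intros x y [L [HL [Hy Hx]]]. exists (T L). repeat split; auto.
    apply Hinv; auto. }
  exists (fun A x => forall y, A y -> R x y).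
  split; [split|].
  - intros K a Ha x Hx. apply Rsym, Hx, Ha.
  - intros K L HLK x Hx y Hy. apply Hx, HLK, Hy.
  - intros K HK x; split.
    + intros Hx.
      pose (I := {L : X -> Prop | C L /\ T L x}).
      apply (Hresp I K (fun i => proj1_sig i) HK).
      * intros i; exact (proj1 (proj2_sig i)).
      * intros y Hy. destruct (Hx y Hy) as [L [HL [HLy HLx]]].
        exists (exist _ L (conj HL HLx)). exact HLy.
      * intros i; exact (proj2 (proj2_sig i)).
    + intros Hx y Hy. exists K. auto.
Qed.
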